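(* For all $y,z\in\mathbb{Z}_p$, $S^{y+z}=S^y\circ S^z$ as maps $C(\mathbb{Z}_p,\mathbb{C}_p)\to C(\mathbb{Z}_p,\mathbb{C}_p)$.
   Context: Fix a prime $p$. $\mathbb{C}_p$ denotes the completion of an algebraic closure of $\mathbb{Q}_p$, with absolute value $|\cdot|$ normalized by $|p|=1/p$. $C(\mathbb{Z}_p,\mathbb{C}_p)$ is the $\mathbb{C}_p$-Banach space of continuous functions $\mathbb{Z}_p\to\mathbb{C}_p$ with the sup-norm $\|\cdot\|$. For $n\in\mathbb{Z}_{\ge0}$ and $x\in\mathbb{Z}_p$, $\binom{x}{n}=x(x-1)\cdots(x-n+1)/n!$. For $y\in\mathbb{Z}_p$ and $\phi\in C(\mathbb{Z}_p,\mathbb{C}_p)$ define $S^y(\phi)\in C(\mathbb{Z}_p,\mathbb{C}_p)$ by $S^y(\phi)(x)=\sum_{k\ge0}(-1)^k k!\binom yk\binom xk\phi(x-k)$ (the series converges uniformly in $(x,y)$). *)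

(* Defs.v *)
From HB Require Import structures.
From mathcomp Require Import all_boot all_order all_algebra.
From mathcomp Require Import reals.
From Stdlib Require Import ClassicalEpsilon.
Set Implicit Arguments. Unset Strict Implicit. Unset Printing Implicit Defensive.
Import Order.TTheory GRing.Theory Num.Theory.
Local Open Scope ring_scope.

Section Cp.
Variables (R : realType) (K : closedFieldType) (abs : K -> R).

Definition kcvg (u : nat -> K) (l : K) : Prop :=
  forall e : R, 0 < e -> exists N : nat, forall n : nat, (N <= n)%N -> abs (u n - l) < e.

Definition kcauchy (u : nat -> K) : Prop :=
  forall e : R, 0 < e -> exists N : nat, forall m n : nat,
    (N <= m)%N -> (N <= n)%N -> abs (u m - u n) < e.

Definition algebraicQ (x : K) : Prop :=
  exists q : {poly int}, q != 0 /\ root (map_poly intr q) x.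

(* (K, abs) is (isometrically isomorphic to) C_p: an algebraically closed
   field (closedFieldType) with a non-archimedean absolute value normalized by
   |p| = 1/p, complete, in which the algebraic numbers are dense.  These
   properties characterize C_p up to isometric isomorphism. *)
Definition is_Cp (p : nat) : Prop :=
  [/\ forall x : K, 0 <= abs x,
      forall x : K, abs x = 0 <-> x = 0,
      forall x y : K, abs (x * y) = abs x * abs y,
      forall x y : K, abs (x + y) <= Num.max (abs x) (abs y)
    & abs (p%:R) = (p%:R)^-1] /\
  (forall u : nat -> K, kcauchy u -> exists l : K, kcvg u l) /\
  (forall (x : K) (e : R), 0 < e -> exists a : K, algebraicQ a /\ abs (x - a) < e).

(* Z_p inside C_p: the closure of the natural numbers *)
Definition Zp_mem (x : K) : Prop :=
  forall e : R, 0 < e -> exists n : nat, abs (x - n%:R) < e.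

(* phi : Z_p -> C_p continuous (phi is given as a function on K; only its
   values on Z_p matter) *)
Definition cont_Zp (phi : K -> K) : Prop :=
  forall x : K, Zp_mem x -> forall e : R, 0 < e -> exists2 d : R, 0 < d &
    forall x' : K, Zp_mem x' -> abs (x - x') < d -> abs (phi x - phi x') < e.

(* sum of a convergent series (an arbitrary value if it diverges) *)
Definition ksum (u : nat -> K) : K :=
  epsilon (inhabits 0) (fun l => kcvg (fun n => \sum_(k < n) u k) l).

Definition kbinom (x : K) (k : nat) : K :=
  (\prod_(i < k) (x - i%:R)) / (k`!)%:R.

Definition Sop (y : K) (phi : K -> K) : K -> K :=
  fun x => ksum (fun k => (-1) ^+ k * (k`!)%:R * kbinom y k * kbinom x k
                          * phi (x - k%:R)).

End Cp.

(* Main.v *)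
Require Import Defs.
From HB Require Import structures.
From mathcomp Require Import all_boot all_order all_algebra.
From mathcomp Require Import reals.
From mathcomp Require Import lra ring zify.
From Stdlib Require Import ClassicalEpsilon FunctionalExtensionality Classical.
Set Implicit Arguments. Unset Strict Implicit. Unset Printing Implicit Defensive.
Import Order.TTheory GRing.Theory Num.Theory.
Local Open Scope ring_scope.

Section Basics.
Variables (R : realType) (K : closedFieldType) (abs : K -> R).
Hypothesis ab_ge0 : forall x : K, 0 <= abs x.
Hypothesis ab_eq0 : forall x : K, abs x = 0 <-> x = 0.
Hypothesis abM : forall x y : K, abs (x * y) = abs x * abs y.
Hypothesis abD : forall x y : K, abs (x + y) <= Num.max (abs x) (abs y).

Lemma ab0 : abs 0 = 0. Proof. by apply/ab_eq0. Qed.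

Lemma ab1 : abs 1 = 1.
Proof.
have h : abs 1 = abs 1 * abs 1 by rewrite -abM mulr1.
have n0 : abs 1 != 0 by apply/eqP => /ab_eq0 /eqP; rewrite oner_eq0.
by apply: (mulIf n0); rewrite mul1r -h.
Qed.

Lemma abN1 : abs (-1) = 1.
Proof.
have h : abs (-1) * abs (-1) = 1 by rewrite -abM mulrNN mulr1 ab1.
have := ab_ge0 (-1); nra.
Qed.

Lemma abN x : abs (- x) = abs x.
Proof. by rewrite -mulN1r abM abN1 mul1r. Qed.

Lemma abB x y : abs (x - y) = abs (y - x).
Proof. by rewrite -abN opprB. Qed.

Lemma abD_le x y e : abs x <= e -> abs y <= e -> abs (x + y) <= e.
Proof. move=> hx hy; apply: le_trans (abD x y) _; by rewrite ge_max hx hy. Qed.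

Lemma abD_lt x y e : abs x < e -> abs y < e -> abs (x + y) < e.
Proof. move=> hx hy; apply: le_lt_trans (abD x y) _; by rewrite gt_max hx hy. Qed.

Lemma abB_le x y e : abs x <= e -> abs y <= e -> abs (x - y) <= e.
Proof. by move=> hx hy; apply: abD_le; rewrite ?abN. Qed.

Lemma abB_lt x y e : abs x < e -> abs y < e -> abs (x - y) < e.
Proof. by move=> hx hy; apply: abD_lt; rewrite ?abN. Qed.

Lemma ab_sum_le (I : Type) (r : seq I) (P : pred I) (F : I -> K) e :
  0 <= e -> (forall i, P i -> abs (F i) <= e) -> abs (\sum_(i <- r | P i) F i) <= e.
Proof.
move=> e0 h; apply: (big_ind (fun x => abs x <= e)); first by rewrite ab0.
  by move=> a b; apply: abD_le.
by [].
Qed.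

Lemma ab_sum_lt (I : Type) (r : seq I) (P : pred I) (F : I -> K) e :
  0 < e -> (forall i, P i -> abs (F i) < e) -> abs (\sum_(i <- r | P i) F i) < e.
Proof.
move=> e0 h; apply: (big_ind (fun x => abs x < e)); first by rewrite ab0.
  by move=> a b; apply: abD_lt.
by [].
Qed.

Lemma ab_nat n : abs n%:R <= 1.
Proof.
elim: n => [|n IH]; first by rewrite ab0.
by rewrite -addn1 natrD; apply: abD_le => //; rewrite ab1.
Qed.

Lemma abX x n : abs (x ^+ n) = abs x ^+ n.
Proof. elim: n => [|n IH]; by rewrite ?ab1 // !exprS abM IH. Qed.

Lemma abV x : abs (x^-1) = (abs x)^-1.
Proof.
have [->|x0] := eqVneq x 0; first by rewrite invr0 ab0 invr0.
have h : abs x * abs x^-1 = 1 by rewrite -abM mulfV // ab1.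
have ax0 : abs x != 0 by apply/eqP => /ab_eq0 /eqP; rewrite (negbTE x0).
by rewrite -(mulKf ax0 (abs x^-1)) h mulr1.
Qed.

Lemma ab_prod (I : Type) (r : seq I) (P : pred I) (F : I -> K) :
  abs (\prod_(i <- r | P i) F i) = \prod_(i <- r | P i) abs (F i).
Proof.
elim: r => [|a r IH]; first by rewrite !big_nil ab1.
rewrite !big_cons; case: (P a) => //; by rewrite abM IH.
Qed.

Lemma ab_prod_le1 (I : Type) (r : seq I) (P : pred I) (F : I -> K) :
  (forall i, P i -> abs (F i) <= 1) -> abs (\prod_(i <- r | P i) F i) <= 1.
Proof.
move=> h; rewrite ab_prod.
suff /andP[] : 0 <= \prod_(i <- r | P i) abs (F i) <= 1 by [].
apply: (big_ind (fun x => 0 <= x <= 1)); first by rewrite ler01 lexx.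
  move=> a b /andP[a0 a1] /andP[b0 b1]; rewrite mulr_ge0 //=; exact: mulr_ile1.
by move=> i Pi; rewrite ab_ge0 h.
Qed.

Lemma le0_of_lt (a : R) : (forall e, 0 < e -> a < e) -> a <= 0.
Proof.
move=> h; rewrite leNgt; apply/negP => a0; by have := h a a0; rewrite ltxx.
Qed.

Lemma kcvg_uniq u l1 l2 : kcvg abs u l1 -> kcvg abs u l2 -> l1 = l2.
Proof.
move=> h1 h2; apply/eqP; rewrite -subr_eq0; apply/eqP/ab_eq0.
apply/le_anti; rewrite ab_ge0 andbT; apply: le0_of_lt => e e0.
have [N1 H1] := h1 e e0; have [N2 H2] := h2 e e0.
have hh : l1 - l2 = (u (maxn N1 N2) - l2) - (u (maxn N1 N2) - l1) by ring.
rewrite hh; apply: abB_lt; [apply: H2 | apply: H1]; by rewrite ?leq_maxl ?leq_maxr.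
Qed.

Lemma ksumE (u : nat -> K) (l : K) : kcvg abs (fun n => \sum_(k < n) u k) l -> ksum abs u = l.
Proof.
move=> h; rewrite /ksum; have := epsilon_spec (inhabits 0) (fun l => kcvg abs (fun n => \sum_(k < n) u k) l).
move=> /(_ (ex_intro _ l h)) h2; exact: kcvg_uniq h2 h.
Qed.


Lemma sum_diff (u : nat -> K) m n : (m <= n)%N ->
  \sum_(k < n) u k - \sum_(k < m) u k = \sum_(m <= k < n) u k.
Proof.
move=> mn; rewrite -!(big_mkord xpredT) (big_cat_nat (leq0n m) mn) /=.
by ring.
Qed.

Lemma ab_sum_nat_lt (F : nat -> K) m n e :
  0 < e -> (forall i, (m <= i < n)%N -> abs (F i) < e) -> abs (\sum_(m <= i < n) F i) < e.
Proof.
move=> e0 h; rewrite big_nat_cond; apply: ab_sum_lt => // i /andP[hi _]; exact: h.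
Qed.

Lemma ab_sum_nat_le (F : nat -> K) m n e :
  0 <= e -> (forall i, (m <= i < n)%N -> abs (F i) <= e) -> abs (\sum_(m <= i < n) F i) <= e.
Proof.
move=> e0 h; rewrite big_nat_cond; apply: ab_sum_le => // i /andP[hi _]; exact: h.
Qed.

Hypothesis hcomp : forall u : nat -> K, kcauchy abs u -> exists l : K, kcvg abs u l.

Lemma series_cvg (u : nat -> K) :
  (forall e, 0 < e -> exists N, forall n, (N <= n)%N -> abs (u n) < e) ->
  exists l, kcvg abs (fun n => \sum_(k < n) u k) l.
Proof.
move=> h; apply: hcomp => e e0; have [N HN] := h e e0; exists N => m n hm hn.
wlog mn : m n hm hn / (n <= m)%N.
  move=> W; have [nm|mn] := leqP n m; first exact: W.
  by rewrite abB; apply: W => //; apply: ltnW.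
rewrite sum_diff //; apply: ab_sum_nat_lt => // i /andP[ni _]; apply: HN.
exact: leq_trans hn ni.
Qed.


Lemma kcvg_le (v : nat -> K) l e N :
  kcvg abs v l -> (forall n, (N <= n)%N -> abs (v n) <= e) -> abs l <= e.
Proof.
move=> hv hb; rewrite leNgt; apply/negP => hl.
have e0 : 0 < abs l by apply: (le_lt_trans _ hl); exact: le_trans (ab_ge0 _) (hb N (leqnn N)).
have [M HM] := hv _ e0.
have : abs l < abs l.
  have E : l = v (maxn N M) - (v (maxn N M) - l) by ring.
  rewrite {1}E; apply: abB_lt; first by apply: (le_lt_trans _ hl); apply: hb; rewrite leq_maxl.
  by apply: HM; rewrite leq_maxr.
by rewrite ltxx.
Qed.

Lemma tail_le (u : nat -> K) l n e :
  0 <= e -> kcvg abs (fun m => \sum_(k < m) u k) l ->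
  (forall j, (n <= j)%N -> abs (u j) <= e) -> abs (l - \sum_(k < n) u k) <= e.
Proof.
move=> e0 hl hu.
apply: (@kcvg_le (fun m => \sum_(k < m) u k - \sum_(k < n) u k) _ _ n).
  move=> d d0; have [N HN] := hl d d0; exists N => m hm.
  have -> : \sum_(k < m) u k - \sum_(k < n) u k - (l - \sum_(k < n) u k)
     = \sum_(k < m) u k - l by ring.
  exact: HN.
move=> m nm; rewrite sum_diff //; apply: ab_sum_nat_le => // i /andP[ni _]; exact: hu.
Qed.

Lemma kcvg_scale (v : nat -> K) l c : kcvg abs v l -> kcvg abs (fun n => c * v n) (c * l).
Proof.
move=> h e e0; have [->|c0] := eqVneq c 0.
  by exists 0%N => n _; rewrite !mul0r subr0 ab0.
have ac : 0 < abs c by rewrite lt_def ab_ge0 andbT; apply/eqP => /ab_eq0 /eqP; rewrite (negbTE c0).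
have [N HN] := h (e / abs c) (divr_gt0 e0 ac); exists N => n hn.
rewrite -mulrBr abM mulrC -ltr_pdivlMr //; exact: HN.
Qed.

Lemma ksum_scale (u : nat -> K) c l : kcvg abs (fun n => \sum_(k < n) u k) l ->
  ksum abs (fun k => c * u k) = c * ksum abs u.
Proof.
move=> h; rewrite (ksumE h); apply: ksumE.
have := kcvg_scale c h; congr kcvg; apply: functional_extensionality => n.
by rewrite mulr_sumr.
Qed.


Lemma triangle (a : nat -> nat -> K) n :
  \sum_(t < n) \sum_(i < t.+1) a i (t - i)%N = \sum_(k < n) \sum_(j < n - k) a k j.
Proof.
elim: n => [|n IH]; first by rewrite !big_ord0.
rewrite big_ord_recr /= IH [RHS]big_ord_recr /= subSnn big_ord1.
rewrite (big_ord_recr n) /= subnn.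
under [in RHS]eq_bigr => k _ do rewrite subSn ?(ltnW (ltn_ord k)) // big_ord_recr /=.
by rewrite big_split /= addrA.
Qed.

Lemma double_sum (a : nat -> nat -> K) :
  (forall e, 0 < e -> exists N, forall k j, ((N <= k) || (N <= j))%N -> abs (a k j) < e) ->
  ksum abs (fun k => ksum abs (a k)) = ksum abs (fun n => \sum_(i < n.+1) a i (n - i)%N).
Proof.
move=> van.
have ha k : kcvg abs (fun n => \sum_(j < n) a k j) (ksum abs (a k)).
  have [l hl] : exists l, kcvg abs (fun n => \sum_(j < n) a k j) l.
    apply: series_cvg => e e0; have [N HN] := van e e0; exists N => n hn.
    by apply: HN; rewrite hn orbT.
  by rewrite (ksumE hl).
have [L hL] : exists L, kcvg abs (fun n => \sum_(t < n) \sum_(i < t.+1) a i (t - i)%N) L.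
  apply: (@series_cvg (fun t => \sum_(i < t.+1) a i (t - i)%N)) => e e0; have [N HN] := van e e0; exists (N + N)%N => n hn.
  cbv beta; apply: ab_sum_lt; first exact: e0.
  move=> i _; apply: HN.
  have := ltn_ord i; case: (leqP N i) => //= hi hin; lia.
rewrite (ksumE hL); apply: ksumE => e e0.
have e20 : 0 < e / 2 by rewrite divr_gt0.
have e2e : e / 2 < e by rewrite ltr_pdivrMr // ltr_pMr // ltr1n.
have [N HN] := van _ e20; have [N2 HN2] := hL _ e20.
exists (maxn (N + N) N2) => n hn.
have h1 : (N + N <= n)%N by apply: leq_trans hn; rewrite leq_maxl.
have h2 : (N2 <= n)%N by apply: leq_trans hn; rewrite leq_maxr.
have -> : \sum_(k < n) ksum abs (a k) - L =
   (\sum_(k < n) ksum abs (a k) - \sum_(t < n) \sum_(i < t.+1) a i (t - i)%N)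
   + (\sum_(t < n) \sum_(i < t.+1) a i (t - i)%N - L) by ring.
apply: abD_lt; last exact: lt_trans (HN2 n h2) e2e.
apply: le_lt_trans e2e.
rewrite triangle -sumrB; apply: ab_sum_le; first exact: ltW.
move=> k _.
have -> : ksum abs (a k) - \sum_(j < n - k) a k j =
  (ksum abs (a k) - \sum_(j < n) a k j) + (\sum_(j < n) a k j - \sum_(j < n - k) a k j) by ring.
apply: abD_le.
  apply: tail_le => //; first exact: ltW.
  move=> j hj; apply: ltW; apply: HN; apply/orP; right; lia.
rewrite sum_diff ?leq_subr //; apply: ab_sum_nat_le; first exact: ltW.
move=> j /andP[hj1 hj2]; apply: ltW; apply: HN.
have := ltn_ord k; case: (leqP N k) => //= hk hkn; lia.
Qed.

Lemma dvdn_fact2 m n : (m <= n)%N -> (m`! %| n`!)%N.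
Proof.
elim: n => [|n IH]; first by rewrite leqn0 => /eqP ->.
rewrite leq_eqVlt => /orP[/eqP -> //|]; rewrite ltnS => /IH h.
by rewrite factS dvdn_mull.
Qed.

Lemma dvdn_pfact (p m : nat) : (0 < p)%N -> (p ^ m %| (m * p)`!)%N.
Proof.
move=> p0; elim: m => [|m IH]; first by rewrite expn0 dvd1n.
have e : (m.+1 * p = ((m.+1 * p).-1).+1)%N by rewrite prednK // muln_gt0.
rewrite e factS -e expnS.
apply: dvdn_mul; first exact: dvdn_mull (dvdnn p).
apply: dvdn_trans IH _; apply: dvdn_fact2; rewrite -ltnS -e mulSn.
lia.
Qed.

Variable p : nat.
Hypothesis hp : prime p.
Hypothesis abp : abs p%:R = (p%:R)^-1.

Let q : R := (p%:R)^-1.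
Lemma p_gt1 : (1 < p)%N. Proof. exact: prime_gt1. Qed.
Lemma pR_gt0 : 0 < (p%:R : R). Proof. by rewrite ltr0n ltnW // p_gt1. Qed.
Lemma q_gt0 : 0 < q. Proof. by rewrite invr_gt0 pR_gt0. Qed.
Lemma q_lt1 : q < 1. Proof. by rewrite invf_lt1 ?pR_gt0 // ltr1n p_gt1. Qed.
Lemma q_ge0 : 0 <= q. Proof. exact: ltW q_gt0. Qed.
Lemma q_le1 : q <= 1. Proof. exact: ltW q_lt1. Qed.

Lemma abpX m : abs (p ^ m)%:R = q ^+ m.
Proof. by rewrite natrX abX abp. Qed.

Lemma qX_le m n : (m <= n)%N -> q ^+ n <= q ^+ m.
Proof. move=> mn; exact: ler_wiXn2l q_ge0 q_le1 _ _ mn. Qed.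

Lemma qX_small e : 0 < e -> exists s, q ^+ s < e.
Proof.
move=> e0; set s := Num.bound (e^-1); exists s.
have h1 : e^-1 < s%:R by apply: archi_boundP; rewrite invr_ge0 ltW.
have h2 : (s%:R : R) <= (p ^ s)%:R by rewrite ler_nat ltnW // ltn_expl // p_gt1.
have h3 : e^-1 < (p%:R) ^+ s by rewrite -natrX; apply: lt_le_trans h2.
rewrite /q exprVn -(invrK e) ltf_pV2 ?posrE ?exprn_gt0 ?pR_gt0 ?invr_gt0 //.
Qed.

Lemma char0 n : (0 < n)%N -> n%:R != 0 :> K.
Proof.
move=> n0; apply/negP => /(natf0_pchar n0) [r hr].
have r0 := pcharf0 hr; have rp := pcharf_prime hr.
have [rpE|rpN] := eqVneq r p.
  have := abp; rewrite -rpE r0 ab0 => /esym /eqP; rewrite invr_eq0.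
  by rewrite pnatr_eq0 => /eqP rz; move: rp; rewrite rz.
have cop : coprime p r by rewrite prime_coprime // dvdn_prime2 // eq_sym rpN.
have [a _ ha] := Bezoutl r (prime_gt0 hp); move: ha; rewrite (eqP cop) => /dvdnP [c hc].
have : (c%:R * p%:R : K) = 1 by rewrite -natrM -hc natrD natrM r0 mulr0 addr0.
move=> /(congr1 abs); rewrite abM abp ab1 => h.
have := ab_nat c; have pg : (1 : R) < p%:R by rewrite ltr1n p_gt1.
have : abs c%:R = p%:R.
  have pn0 : (p%:R : R) != 0 by rewrite gt_eqF ?pR_gt0.
  by apply: (mulIf (invr_neq0 pn0)); rewrite h mulfV.
move=> ->; rewrite leNgt pg //.
Qed.

Lemma ab_fact_gt0 n : 0 < abs (n`!)%:R.
Proof.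
rewrite lt_def ab_ge0 andbT; apply/eqP => /ab_eq0 /eqP; apply/negP.
by apply: char0; exact: fact_gt0.
Qed.

Lemma ab_fact n : abs (n`!)%:R <= q ^+ (n %/ p).
Proof.
have d : (p ^ (n %/ p) %| n`!)%N.
  apply: dvdn_trans (dvdn_pfact _ (prime_gt0 hp)) _; apply: dvdn_fact2.
  exact: leq_divM.
rewrite -(divnK d) natrM abM abpX.
by apply: ler_piMl; [exact: exprn_ge0 q_ge0 | exact: ab_nat].
Qed.

Local Notation Zp := (Zp_mem abs).

Lemma Zp_le1 w : Zp w -> abs w <= 1.
Proof.
move=> h; have [n hn] := h 1 ltr01.
have -> : w = (w - n%:R) + n%:R by ring.
by apply: abD_le; [exact: ltW | exact: ab_nat].
Qed.

Lemma Zp_nat n : Zp n%:R.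
Proof. by move=> e e0; exists n; rewrite subrr ab0. Qed.

Lemma Zp_subn w k : Zp w -> Zp (w - k%:R).
Proof.
move=> h e e0; have [n hn] := h e e0; have [s hs] := qX_small e0.
exists (p ^ s * k + n - k)%N.
have hk : (k <= p ^ s * k + n)%N.
  apply: leq_trans (leq_addr _ _); apply: leq_pmull; by rewrite expn_gt0 prime_gt0.
rewrite natrB // natrD natrM.
have -> : w - k%:R - ((p ^ s)%:R * k%:R + n%:R - k%:R) = (w - n%:R) - (p ^ s)%:R * k%:R by ring.
apply: abB_lt => //; rewrite abM abpX; apply: le_lt_trans hs.
by apply: ler_piMr; [exact: exprn_ge0 q_ge0 | exact: ab_nat].
Qed.

Lemma Zp_lim (v : nat -> K) l : (forall m, Zp (v m)) -> kcvg abs v l -> Zp l.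
Proof.
move=> hv hl e e0; have [N HN] := hl e e0; have [n hn] := hv N e e0.
exists n; have -> : l - n%:R = (v N - n%:R) - (v N - l) by ring.
by apply: abB_lt => //; apply: HN.
Qed.

Lemma Zp_class w m : Zp w -> exists2 b, (b < p ^ m)%N & abs (w - b%:R) <= q ^+ m.
Proof.
move=> h; have [n hn] := h _ (exprn_gt0 m q_gt0); exists (n %% p ^ m)%N.
  by rewrite ltn_pmod // expn_gt0 prime_gt0.
have E : (n%:R : K) = (n %/ p ^ m)%:R * (p ^ m)%:R + (n %% p ^ m)%:R.
  by rewrite -natrM -natrD -divn_eq.
have -> : w - (n %% p ^ m)%:R = (w - n%:R) + (n %/ p ^ m)%:R * (p ^ m)%:R by rewrite E; ring.
apply: abD_le; first exact: ltW.
rewrite abM abpX; apply: ler_piMl; [exact: exprn_ge0 q_ge0 | exact: ab_nat].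
Qed.

Definition F (w : K) k := \prod_(i < k) (w - i%:R).

Lemma F_nat n k : F n%:R k = (n ^_ k)%:R.
Proof.
elim: k => [|k IH]; first by rewrite /F big_ord0 ffactn0.
rewrite /F big_ord_recr /= -/(F _ _) IH ffactnSr natrM.
have [kn|nk] := leqP k n; first by rewrite natrB.
by rewrite ffact_small // !mul0r.
Qed.

Lemma prod_diff (a b : nat -> K) d k :
  0 <= d -> (forall i, abs (a i) <= 1) -> (forall i, abs (b i) <= 1) ->
  (forall i, abs (a i - b i) <= d) ->
  abs (\prod_(i < k) a i - \prod_(i < k) b i) <= d.
Proof.
move=> d0 ha hb hab; elim: k => [|k IH]; first by rewrite !big_ord0 subrr ab0.
rewrite !big_ord_recr /=.
have -> : (\prod_(i < k) a i) * a k - (\prod_(i < k) b i) * b k =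
  (\prod_(i < k) a i - \prod_(i < k) b i) * a k + (\prod_(i < k) b i) * (a k - b k) by ring.
apply: abD_le; rewrite abM.
  by apply: le_trans (ler_wpM2l (ab_ge0 _) (ha k)) _; rewrite mulr1.
have hb1 : abs (\prod_(i < k) b i) <= 1 by apply: ab_prod_le1 => i _.
by apply: le_trans (ler_wpM2r (ab_ge0 _) hb1) _; rewrite mul1r.
Qed.

Lemma kbinomE w k : kbinom w k = F w k / (k`!)%:R.
Proof. by []. Qed.

Lemma Zp_F w k : Zp w -> abs (F w k) <= abs (k`!)%:R.
Proof.
move=> hw; have [n hn] := hw _ (ab_fact_gt0 k).
have -> : F w k = (F w k - F n%:R k) + F n%:R k by ring.
apply: abD_le.
  apply: (@prod_diff (fun i => w - i%:R) (fun i => n%:R - i%:R)); first exact: ltW (ab_fact_gt0 k).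
  - by move=> i; apply: abB_le; [exact: Zp_le1 | exact: ab_nat].
  - by move=> i; apply: abB_le; exact: ab_nat.
  - by move=> i; rewrite (_ : _ - _ = w - n%:R); [exact: ltW | ring].
rewrite F_nat -bin_ffact natrM abM.
by apply: ler_piMl; [exact: ab_ge0 | exact: ab_nat].
Qed.

Lemma Zp_binom w k : Zp w -> abs (kbinom w k) <= 1.
Proof.
move=> hw; rewrite kbinomE abM abV ler_pdivrMr ?ab_fact_gt0 // mul1r; exact: Zp_F.
Qed.

Lemma F_split (x : K) k j : F x k * F (x - k%:R) j = F x (k + j).
Proof.
rewrite /F big_split_ord /=; congr (_ * _); apply: eq_bigr => i _ /=.
by rewrite natrD opprD addrA.
Qed.

Lemma fact_neq0 n : (n`!)%:R != 0 :> K.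
Proof. exact: char0 (fact_gt0 n). Qed.

Lemma kbinom0 (w : K) : kbinom w 0 = 1.
Proof. by rewrite kbinomE /F big_ord0 fact0 divr1. Qed.

Lemma kbinomS (w : K) k : kbinom w k.+1 * k.+1%:R = kbinom w k * (w - k%:R).
Proof.
rewrite !kbinomE /F big_ord_recr /= factS natrM.
have h2 : k.+1%:R != 0 :> K by apply: char0.
move: (fact_neq0 k) h2; move: (k`!)%:R (k.+1)%:R (\prod_(i < k) (w - i%:R)) => a b c ha hb.
by field; rewrite ha hb.
Qed.

Lemma binom_split (x : K) i n : (i <= n)%N ->
  (i`!)%:R * ((n - i)`!)%:R * (kbinom x i * kbinom (x - i%:R) (n - i)) = (n`!)%:R * kbinom x n.
Proof.
move=> hi; rewrite !kbinomE.
have := F_split x i (n - i); rewrite subnKC // => <-.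
move: (fact_neq0 i) (fact_neq0 (n - i)) (fact_neq0 n).
move: (i`!)%:R ((n - i)`!)%:R (n`!)%:R (F x i) (F (x - i%:R) (n - i)) => a b c u v ha hb hc.
by field; rewrite ha hb hc.
Qed.

Lemma vandermonde (y z : K) n :
  \sum_(k < n.+1) kbinom y k * kbinom z (n - k) = kbinom (y + z) n.
Proof.
elim: n => [|n IH]; first by rewrite big_ord1 !kbinom0 mulr1.
have hn : n.+1%:R != 0 :> K by apply: char0.
apply: (mulIf hn); rewrite kbinomS -IH !mulr_suml.
have E1 : forall k : 'I_n.+1, kbinom y k * kbinom z (n - k) * (y + z - n%:R) =
   kbinom y k.+1 * k.+1%:R * kbinom z (n - k) + kbinom y k * (kbinom z (n - k).+1 * (n - k).+1%:R).
  move=> k; have hk : (k <= n)%N by rewrite -ltnS.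
  rewrite -mulrA kbinomS -mulrA kbinomS natrB //.
  move: (kbinom y k) (kbinom z (n - k)) => a b; ring.
rewrite (eq_bigr _ (fun k _ => E1 k)) big_split /=.
have -> : \sum_(k < n.+2) kbinom y k * kbinom z (n.+1 - k) * n.+1%:R =
  \sum_(k < n.+2) (kbinom y k * kbinom z (n.+1 - k) * k%:R)
  + \sum_(k < n.+2) (kbinom y k * kbinom z (n.+1 - k) * (n.+1 - k)%:R).
  rewrite -big_split /=; apply: eq_bigr => k _.
  have hk : (k <= n.+1)%N by rewrite -ltnS.
  by rewrite -mulrDr -natrD subnKC.
congr (_ + _).
  rewrite big_ord_recl /= mulr0 add0r; apply: eq_bigr => k _.
  rewrite /bump /= add1n subSS; ring.
rewrite big_ord_recr /= subnn mulr0 addr0; apply: eq_bigr => k _.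
have hk : (k <= n)%N by rewrite -ltnS.
rewrite subSn //; ring.
Qed.

Section Bounded.
Variable phi : K -> K.
Definition bounded (S : K -> Prop) := exists M, forall w, S w -> abs (phi w) <= M.
Definition kclass b m := fun w => abs (w - b%:R) <= q ^+ m.

Lemma bounded_union n (T : nat -> K -> Prop) : (forall b, (b < n)%N -> bounded (T b)) ->
  exists M, forall b, (b < n)%N -> forall w, T b w -> abs (phi w) <= M.
Proof.
elim: n => [|n IH] h; first by exists 0 => b.
have [M1 H1] := IH (fun b hb => h b (ltnW hb)).
have [M2 H2] := h n (ltnSn n).
exists (Num.max M1 M2) => b; rewrite ltnS leq_eqVlt => /orP[/eqP ->|hb] w hw.
  by rewrite le_max (H2 w hw) orbT.
by rewrite le_max (H1 b hb w hw).
Qed.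

Lemma step S m : (forall w, S w -> Zp w) -> ~ bounded S ->
  exists b, ~ bounded (fun w => S w /\ kclass b m w).
Proof.
move=> hS hnb; apply: NNPP => H; apply: hnb.
have H' : forall b, (b < p ^ m)%N -> bounded (fun w => S w /\ kclass b m w).
  by move=> b _; apply: NNPP => hb; apply: H; exists b.
have [M HM] := bounded_union H'; exists M => w hw.
have [b hb hc] := Zp_class m (hS w hw); exact: (HM b hb).
Qed.

Definition bsel (S : K -> Prop) m :=
  epsilon (inhabits 0%N) (fun b => ~ bounded (fun w => S w /\ kclass b m w)).

Fixpoint Sseq (m : nat) : K -> Prop :=
  match m with
  | 0 => Zp
  | m'.+1 => fun w => Sseq m' w /\ kclass (bsel (Sseq m') m'.+1) m'.+1 w
  end.

Lemma Sseq_inv : ~ bounded Zp -> forall m, ~ bounded (Sseq m) /\ (forall w, Sseq m w -> Zp w).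
Proof.
move=> h; elim=> [|m [IH1 IH2]] //=; split; last by move=> w [/IH2].
have := step (m.+1) IH2 IH1 => ex.
exact: (epsilon_spec (inhabits 0%N) (fun b => ~ bounded (fun w => Sseq m w /\ kclass b m.+1 w)) ex).
Qed.

Lemma Sseq_nest m m' w : (m <= m')%N -> Sseq m' w -> Sseq m w.
Proof.
elim: m' => [|m' IH]; first by rewrite leqn0 => /eqP ->.
rewrite leq_eqVlt => /orP[/eqP -> //|]; rewrite ltnS => hm [hw _]; exact: IH.
Qed.

Lemma phi_bounded : cont_Zp abs phi -> bounded Zp.
Proof.
move=> hc; apply: NNPP => hnb.
have inv := Sseq_inv hnb.
have ne m : exists w, Sseq m w.
  apply: NNPP => hne; apply: (proj1 (inv m)); exists 0 => w hw.
  by exfalso; apply: hne; exists w.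
pose ws m := epsilon (inhabits 0) (Sseq m).
have hws m : Sseq m (ws m) := epsilon_spec (inhabits 0) (Sseq m) (ne m).
pose bb m := bsel (Sseq m) m.+1.
have hcl m w : Sseq m.+1 w -> abs (w - (bb m)%:R) <= q ^+ m.+1 by case.
have hcl2 s m w : (s.+1 <= m)%N -> Sseq m w -> abs (w - (bb s)%:R) <= q ^+ s.+1.
  by move=> hm hw; apply: hcl; exact: Sseq_nest hm hw.
have [l hl] : exists l, kcvg abs ws l.
  apply: hcomp => e e0; have [s hs] := qX_small e0; exists s.+1 => m m' hm hm'.
  have -> : ws m - ws m' = (ws m - (bb s)%:R) - (ws m' - (bb s)%:R) by ring.
  apply: (le_lt_trans _ hs); apply: le_trans (qX_le (leqnSn s)).
  by apply: abB_le; apply: hcl2 (hws _).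
have hlZ : Zp l by apply: (Zp_lim _ hl) => m; exact: (proj2 (inv m)).
have hlb s : abs (l - (bb s)%:R) <= q ^+ s.+1.
  apply: (@kcvg_le (fun m => ws m - (bb s)%:R) _ _ s.+1).
    move=> e e0; have [N HN] := hl e e0; exists N => n hn.
    by rewrite (_ : _ - _ - _ = ws n - l); [exact: HN | ring].
  by move=> n hn; apply: hcl2 (hws _).
have [d d0 hd] := hc l hlZ 1 ltr01.
have [s hs] := qX_small d0.
apply: (proj1 (inv s.+1)); exists (Num.max (abs (phi l)) 1) => w hw.
have hwz : Zp w := proj2 (inv s.+1) w hw.
have hlw : abs (l - w) < d.
  apply: (le_lt_trans _ hs); apply: le_trans (qX_le (leqnSn s)).
  rewrite (_ : l - w = (l - (bb s)%:R) - (w - (bb s)%:R)); last by ring.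
  by apply: abB_le; [exact: hlb | exact: hcl].
have := hd w hwz hlw => h1.
rewrite (_ : phi w = phi l - (phi l - phi w)); last by ring.
apply: le_trans (abD _ _) _; rewrite abN ge_max !le_max lexx /=.
by rewrite (ltW h1) orbT.
Qed.

Lemma fact_small M : 0 < M -> forall e, 0 < e -> exists N, forall j, (N <= j)%N -> abs (j`!)%:R * M < e.
Proof.
move=> M0 e e0; have [s hs] := qX_small (divr_gt0 e0 M0); exists (s * p)%N => j hj.
rewrite -ltr_pdivlMr //; apply: le_lt_trans hs; apply: le_trans (ab_fact j) _.
by apply: qX_le; rewrite leq_divRL // prime_gt0.
Qed.

Lemma abs_sign k : abs ((-1) ^+ k) = 1.
Proof. by rewrite abX abN1 expr1n. Qed.

Theorem main y z x : cont_Zp abs phi -> Zp y -> Zp z -> Zp x ->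
  Sop abs (y + z) phi x = Sop abs y (Sop abs z phi) x.
Proof.
move=> hc hy hz hx.
have [M0 HM0] := phi_bounded hc.
set M := Num.max M0 1.
have M0' : 0 < M by rewrite lt_max ltr01 orbT.
have HM w : Zp w -> abs (phi w) <= M by move=> hw; rewrite le_max HM0.
pose c k := (-1) ^+ k * (k`!)%:R * kbinom y k * kbinom x k.
pose u k j := (-1) ^+ j * (j`!)%:R * kbinom z j * kbinom (x - k%:R) j * phi (x - k%:R - j%:R).
have hcb k : abs (c k) <= abs (k`!)%:R.
  rewrite /c abM abM abM abs_sign mul1r -[X in _ <= X]mulr1 -mulrA.
  by apply: ler_wpM2l => //; apply: mulr_ile1 => //; apply: Zp_binom.
have hub k j : abs (u k j) <= abs (j`!)%:R * M.
  rewrite /u abM abM abM abM abs_sign mul1r -!mulrA; apply: ler_wpM2l => //.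
  rewrite -[M]mul1r; apply: ler_pM; rewrite ?mulr_ge0 //; first exact: Zp_binom.
  rewrite -[M]mul1r; apply: ler_pM => //; first by apply: Zp_binom; apply: Zp_subn.
  by apply: HM; apply: Zp_subn; exact: Zp_subn.
have hu k : kcvg abs (fun n => \sum_(j < n) u k j) (ksum abs (u k)).
  have [l hl] : exists l, kcvg abs (fun n => \sum_(j < n) u k j) l.
    apply: series_cvg => e e0; have [N HN] := fact_small M0' e0; exists N => n hn.
    exact: le_lt_trans (hub k n) (HN n hn).
  by rewrite (ksumE hl).
have -> : Sop abs y (Sop abs z phi) x = ksum abs (fun k => ksum abs (fun j => c k * u k j)).
  rewrite /Sop; congr ksum; apply: functional_extensionality => k.
  by rewrite (ksum_scale _ (hu k)).
rewrite double_sum; last first.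
  move=> e e0; have [N HN] := fact_small M0' e0; exists N => k j /orP[hk|hj]; rewrite abM.
    apply: le_lt_trans (HN k hk).
    apply: le_trans (ler_pM (ab_ge0 _) (ab_ge0 _) (hcb k) (hub k j)) _.
    by apply: ler_wpM2l => //; apply: ler_piMl; [exact: ltW | exact: ab_nat].
  apply: le_lt_trans (HN j hj); rewrite -[X in _ <= X]mul1r.
  apply: ler_pM => //; first exact: le_trans (hcb k) (ab_nat _).
rewrite /Sop; congr ksum; apply: functional_extensionality => n.
have hi : forall i : 'I_n.+1, c i * u i (n - i)%N =
    ((-1) ^+ n * ((n`!)%:R * kbinom x n) * phi (x - n%:R)) * (kbinom y i * kbinom z (n - i)).
  move=> i; have hin : (i <= n)%N by rewrite -ltnS.
  rewrite /c /u.
  have -> : x - i%:R - (n - i)%:R = x - n%:R by rewrite natrB //; ring.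
  rewrite -(binom_split x hin).
  have -> : (-1) ^+ n = (-1) ^+ i * (-1) ^+ (n - i) :> K by rewrite -exprD subnKC.
  ring.
rewrite (eq_bigr _ (fun i _ => hi i)) -mulr_sumr vandermonde; ring.
Qed.
End Bounded.
End Basics.

Theorem proposition6p3 (p : nat) (R : realType) (K : closedFieldType)
    (abs : K -> R) :
  prime p -> is_Cp abs p ->
  forall y z : K, Zp_mem abs y -> Zp_mem abs z ->
  forall phi : K -> K, cont_Zp abs phi ->
  forall x : K, Zp_mem abs x ->
    Sop abs (y + z) phi x = Sop abs y (Sop abs z phi) x.
Proof.
move=> hp [[h1 h2 h3 h4 h5] [hcomp _]] y z hy hz phi hc x hx.
exact: (main h1 h2 h3 h4 hcomp hp h5 hc hy hz hx).
Qed.
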